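(* Let $\mathcal C$ be a graph class of effectively bounded expansion. Then there exist a computable function $f$ and a CONGESTED-CLIQUE algorithm that, given a vertex- and edge-coloured graph $G$ whose underlying graph belongs to $\mathcal C$ (as the network) and a first-order sentence $\varphi$ (known to all nodes), decides in $f(|\varphi|)\cdot\log n$ rounds whether $G\models\varphi$, where $n=|V(G)|$. In particular, first-order model checking parameterized by the length of the formula is in CONGESTED-CLIQUE-XPL on $\mathcal C$.
   Context: CONGESTED-CLIQUE model: the network is a finite connected undirected graph $G$, $n=|V(G)|$, nodes have unique $O(\log n)$-bit identifiers and initially know their identifier, neighbours' identifiers, input labels and the parameter; in each synchronous round each node may send an $O(\log n)$-bit message to every other node; arbitrary local computation. Decisions are disjunctive: the answer is yes iff some node accepts. CONGESTED-CLIQUE-XPL is the class of parameterized problems decidable in $f(k)\cdot(\log n)^{g(k)}$ rounds for computable $f,g$. $|\varphi|$ is the length of a fixed computable encoding of $\varphi$. A graph $H$ is a depth-$r$ minor of $G$ if $H$ can be obtained from a subgraph of $G$ by contracting mutually disjoint connected subgraphs of radius at most $r$. A class $\mathcal C$ has bounded expansion if there is $f:\mathbb N\to\mathbb N$ such that for every $r$, every depth-$r$ minor $H$ of a graph in $\mathcal C$ satisfies $|E(H)|/|V(H)|\le f(r)$; it has effectively bounded expansion if such an $f$ can be chosen computable. *)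

(* Defs.v *)
From mathcomp Require Import all_boot.
Set Implicit Arguments.
Unset Strict Implicit.
Unset Printing Implicit Defensive.

(* Computability: mu-recursive functions (equivalent to Turing         *)
(* computability).  Arities are handled leniently (missing arguments   *)
(* read as 0), which does not change the class of computable functions.*)
Inductive recf : Type :=
| RZero
| RSucc
| RProj (i : nat)
| RComp (g : recf) (hs : list recf)
| RPrim (g h : recf)
| RMu (g : recf).

Inductive reval : recf -> seq nat -> nat -> Prop :=
| ev_zero xs : reval RZero xs 0
| ev_succ xs : reval RSucc xs (head 0 xs).+1
| ev_proj i xs : reval (RProj i) xs (nth 0 xs i)
| ev_comp g hs xs ys y :
    revals hs xs ys -> reval g ys y -> reval (RComp g hs) xs y
| ev_prim0 g h xs y : reval g xs y -> reval (RPrim g h) (0 :: xs) y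
| ev_primS g h k xs z y :
    reval (RPrim g h) (k :: xs) z -> reval h (k :: z :: xs) y ->
    reval (RPrim g h) (k.+1 :: xs) y
| ev_mu g xs y :
    reval g (y :: xs) 0 ->
    (forall z, z < y -> exists2 w, reval g (z :: xs) w & w <> 0) ->
    reval (RMu g) xs y
with revals : list recf -> seq nat -> seq nat -> Prop :=
| evs_nil xs : revals nil xs [::]
| evs_cons h hs xs y ys :
    reval h xs y -> revals hs xs ys -> revals (h :: hs) xs (y :: ys).

Definition computable (f : nat -> nat) : Prop :=
  exists p : recf, forall x, reval p [:: x] (f x).

Definition simple_graph (n : nat) (adj : rel 'I_n) : Prop :=
  (forall x y, adj x y = adj y x) /\ (forall x, adj x x = false).

Definition connected_graph (n : nat) (adj : rel 'I_n) : Prop :=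
  forall x y, connect adj x y.

Definition nedges (n : nat) (adj : rel 'I_n) : nat :=
  #|[set p : 'I_n * 'I_n | adj p.1 p.2 && (p.1 < p.2)]|.

Definition graph_class := forall n : nat, rel 'I_n -> Prop.

Fixpoint ball (T : finType) (adj : rel T) (X : {set T}) (c : T) (k : nat)
  : {set T} :=
  match k with
  | 0 => [set c]
  | k'.+1 => let b := ball adj X c k' in
             b :|: [set y in X | [exists x in b, adj x y]]
  end.

Definition depth_minor (r n : nat) (adj : rel 'I_n) (m : nat) (adjH : rel 'I_m)
  : Prop :=
  exists B : 'I_m -> {set 'I_n},
    (forall i j, i != j -> [disjoint B i & B j]) /\
    (forall i, exists2 c, c \in B i & B i \subset ball adj (B i) c r) /\
    (forall i j, adjH i j -> exists x y, [/\ x \in B i, y \in B j & adj x y]).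

Definition bounded_expansion_with (C : graph_class) (f : nat -> nat) : Prop :=
  forall r n (adj : rel 'I_n), C n adj -> simple_graph adj ->
  forall m (adjH : rel 'I_m), simple_graph adjH -> depth_minor r adj adjH ->
  nedges adjH <= f r * m.

Definition effectively_bounded_expansion (C : graph_class) : Prop :=
  exists f, computable f /\ bounded_expansion_with C f.

Inductive formula : Type :=
| FEq (x y : nat)
| FAdj (x y : nat)
| FVcol (i x : nat)
| FEcol (j x y : nat)
| FNot (p : formula)
| FAnd (p q : formula)
| FOr (p q : formula)
| FEx (x : nat) (p : formula)
| FAll (x : nat) (p : formula).

Fixpoint fv (p : formula) : seq nat :=
  match p with
  | FEq x y | FAdj x y | FEcol _ x y => [:: x; y]
  | FVcol _ x => [:: x]
  | FNot q => fv q
  | FAnd q r | FOr q r => fv q ++ fv r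
  | FEx x q | FAll x q => filter (fun z => z != x) (fv q)
  end.

Definition sentence (p : formula) : bool := nilp (fv p).

(* length of the encoding: one symbol per connective, indices in unary *)
Fixpoint flen (p : formula) : nat :=
  match p with
  | FEq x y | FAdj x y => 1 + x.+1 + y.+1
  | FVcol i x => 1 + i.+1 + x.+1
  | FEcol j x y => 1 + j.+1 + x.+1 + y.+1
  | FNot q => (flen q).+1
  | FAnd q r | FOr q r => (flen q + flen r).+1
  | FEx x q | FAll x q => (x.+1 + flen q).+1
  end.

Fixpoint sat (n : nat) (adj : rel 'I_n) (vcol : 'I_n -> nat -> bool)
  (ecol : 'I_n -> 'I_n -> nat -> bool) (e : nat -> 'I_n) (p : formula) : Prop :=
  match p with
  | FEq x y => e x = e y
  | FAdj x y => adj (e x) (e y)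
  | FVcol i x => vcol (e x) i
  | FEcol j x y => adj (e x) (e y) && ecol (e x) (e y) j
  | FNot q => ~ sat adj vcol ecol e q
  | FAnd q r => sat adj vcol ecol e q /\ sat adj vcol ecol e r
  | FOr q r => sat adj vcol ecol e q \/ sat adj vcol ecol e r
  | FEx x q => exists v, sat adj vcol ecol (fun z => if z == x then v else e z) q
  | FAll x q => forall v, sat adj vcol ecol (fun z => if z == x then v else e z) q
  end.

(* G |= phi for a sentence phi (the environment is irrelevant; any     *)
(* vertex may be used since n > 0)                                     *)
Definition models (n : nat) (adj : rel 'I_n) vcol ecol (v0 : 'I_n)
  (p : formula) : Prop := sat adj vcol ecol (fun _ => v0) p.

(* CONGESTED-CLIQUE algorithms (synchronous rounds, every node can     *)
(* send one message, a bit string, to every other node addressed by    *)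
(* its identifier; arbitrary local computation).                        *)
(* Initial knowledge of a node: its identifier, its own colours, the   *)
(* identifiers of its neighbours together with the colours of the      *)
(* connecting edges, and the parameter (the formula).                  *)
Record cc_algorithm := CCAlg {
  cc_state : Type;
  cc_init : nat -> (nat -> bool) -> (nat -> option (nat -> bool)) ->
            formula -> cc_state;
  (* message sent to the node with the given identifier *)
  cc_send : cc_state -> nat -> seq bool;
  (* received messages, indexed by sender identifier *)
  cc_recv : cc_state -> (nat -> option (seq bool)) -> cc_state;
  (* output: None = still running, Some b = halted with decision b *)
  cc_out : cc_state -> option bool
}.

Section Run.
Variables (A : cc_algorithm) (n : nat) (adj : rel 'I_n)
  (vcol : 'I_n -> nat -> bool) (ecol : 'I_n -> 'I_n -> nat -> bool)
  (id : 'I_n -> nat) (p : formula).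

Definition init_state (v : 'I_n) : cc_state A :=
  @cc_init A (id v) (vcol v)
    (fun k => match [pick u | adj v u && (id u == k)] with
              | Some u => Some (ecol v u)
              | None => None end) p.

Fixpoint run (t : nat) : 'I_n -> cc_state A :=
  match t with
  | 0 => init_state
  | t'.+1 => let st := run t' in
      fun v => @cc_recv A (st v)
        (fun k => match [pick u | (u != v) && (id u == k)] with
                  | Some u => Some (@cc_send A (st u) (id v))
                  | None => None end)
  end.
End Run.

Definition cc_decides (A : cc_algorithm) (B T : nat) (n : nat) (adj : rel 'I_n)
  vcol ecol (id : 'I_n -> nat) (p : formula) (answer : Prop) : Prop :=
  (forall t u v, t < T -> u != v ->
     size (@cc_send A (run A adj vcol ecol id p t u) (id v)) <= B * up_log 2 n) /\
  (forall t v b, t < T -> @cc_out A (run A adj vcol ecol id p t v) = Some b ->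
     @cc_out A (run A adj vcol ecol id p t.+1 v) = Some b) /\
  (forall v, @cc_out A (run A adj vcol ecol id p T v) != None) /\
  ((exists v, @cc_out A (run A adj vcol ecol id p T v) = Some true) <-> answer).

(* Main.v *)
Require Import Defs.
From mathcomp Require Import all_boot.
From Stdlib Require Import ClassicalEpsilon Lia.
From mathcomp Require Import zify.
Set Implicit Arguments.
Unset Strict Implicit.
Unset Printing Implicit Defensive.


Fixpoint bits (w x : nat) : seq bool :=
  match w with 0 => [::] | w'.+1 => odd x :: bits w' x./2 end.
Fixpoint frombits (s : seq bool) : nat :=
  match s with [::] => 0 | b :: s' => b + (frombits s').*2 end.

Lemma size_bits w x : size (bits w x) = w.
Proof. by elim: w x => //= w IH x; rewrite IH. Qed.

Lemma bitsK w x : x < 2 ^ w -> frombits (bits w x) = x.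
Proof.
elim: w x => [|w IH] x /=; first by rewrite expn0 ltnS leqn0 => /eqP.
move=> hx; rewrite IH ?odd_double_half //.
rewrite -(ltn_pmul2l (isT : 0 < 2)) -expnS (leq_ltn_trans _ hx) //.
by rewrite mul2n -[X in _ <= X]odd_double_half leq_addl.
Qed.

Definition constP (b : nat) : recf := iter b (fun p => RComp RSucc [:: p]) RZero.
Definition addP (a : nat) (p : recf) : recf := iter a (fun q => RComp RSucc [:: q]) p.

Lemma reval_const b xs : reval (constP b) xs b.
Proof.
elim: b => [|b IH] /=; first exact: ev_zero.
apply: (ev_comp (ys := [:: b])); first by apply: evs_cons => //; exact: evs_nil.
exact: (ev_succ [:: b]).
Qed.

Lemma reval_add a p xs y : reval p xs y -> reval (addP a p) xs (y + a).
Proof.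
move=> H; elim: a => [|a IH] /=; first by rewrite addn0.
apply: (ev_comp (ys := [:: y + a])); first by apply: evs_cons => //; exact: evs_nil.
by rewrite addnS; exact: (ev_succ [:: y + a]).
Qed.

Lemma computable_affine a b : computable (fun x => a * x + b).
Proof.
exists (RPrim (constP b) (addP a (RProj 1))) => x.
elim: x => [|x IH]; first by rewrite muln0 add0n; apply: ev_prim0; exact: reval_const.
apply: (ev_primS IH).
have -> : a * x.+1 + b = (a * x + b) + a by rewrite mulnS; lia.
apply: reval_add; exact: (ev_proj 1 [:: x; a * x + b]).
Qed.


Lemma sat_fv n (adj : rel 'I_n) vc ec (p : formula) (e1 e2 : nat -> 'I_n) :
  (forall z, z \in fv p -> e1 z = e2 z) ->
  sat adj vc ec e1 p <-> sat adj vc ec e2 p.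
Proof.
elim: p e1 e2 => /=.
- by move=> x y e1 e2 H; rewrite !H ?inE ?eqxx ?orbT.
- by move=> x y e1 e2 H; rewrite !H ?inE ?eqxx ?orbT.
- by move=> i x e1 e2 H; rewrite !H ?inE ?eqxx ?orbT.
- by move=> j x y e1 e2 H; rewrite !H ?inE ?eqxx ?orbT.
- by move=> p IH e1 e2 H; rewrite (IH e1 e2 H).
- move=> p IHp q IHq e1 e2 H.
  rewrite (IHp e1 e2) ?(IHq e1 e2) // => z hz; apply: H; rewrite mem_cat hz ?orbT //.
- move=> p IHp q IHq e1 e2 H.
  rewrite (IHp e1 e2) ?(IHq e1 e2) // => z hz; apply: H; rewrite mem_cat hz ?orbT //.
- move=> x p IH e1 e2 H.
  have H' : forall v z, z \in fv p -> (if z == x then v else e1 z) = (if z == x then v else e2 z).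
    move=> v z hz; case: eqP => // /eqP zx; apply: H; by rewrite mem_filter zx.
  by split=> [[v hv]|[v hv]]; exists v; [apply/(IH _ _ (H' v))|apply/(IH _ _ (H' v))].
- move=> x p IH e1 e2 H.
  have H' : forall v z, z \in fv p -> (if z == x then v else e1 z) = (if z == x then v else e2 z).
    move=> v z hz; case: eqP => // /eqP zx; apply: H; by rewrite mem_filter zx.
  by split=> hv v; [apply/(IH _ _ (H' v))|apply/(IH _ _ (H' v))].
Qed.

Lemma sat_iso n1 n2 (adj1 : rel 'I_n1) vc1 ec1 (adj2 : rel 'I_n2) vc2 ec2
  (h : 'I_n1 -> 'I_n2) (hinv : 'I_n2 -> 'I_n1) K :
  injective h -> (forall w, h (hinv w) = w) ->
  (forall x y, adj2 (h x) (h y) = adj1 x y) ->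
  (forall x i, i < K -> vc2 (h x) i = vc1 x i) ->
  (forall x y j, j < K -> adj1 x y -> ec2 (h x) (h y) j = ec1 x y j) ->
  forall p, flen p <= K -> forall e1 e2, (forall z, e2 z = h (e1 z)) ->
  sat adj1 vc1 ec1 e1 p <-> sat adj2 vc2 ec2 e2 p.
Proof.
move=> hi hK hadj hvc hec; elim => /=.
- move=> x y _ e1 e2 E; rewrite !E; split; [by move->|exact: hi].
- by move=> x y _ e1 e2 E; rewrite !E hadj.
- by move=> i x hl e1 e2 E; rewrite !E hvc //; lia.
- move=> j x y hl e1 e2 E; rewrite !E hadj.
  case hA: (adj1 _ _) => //=; rewrite hec //; lia.
- by move=> p IH hl e1 e2 E; rewrite (IH _ e1 e2 E) //; lia.
- move=> p IHp q IHq hl e1 e2 E; rewrite (IHp _ e1 e2 E) ?(IHq _ e1 e2 E) //; lia.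
- move=> p IHp q IHq hl e1 e2 E; rewrite (IHp _ e1 e2 E) ?(IHq _ e1 e2 E) //; lia.
- move=> x p IH hl e1 e2 E.
  have hl' : flen p <= K by lia.
  have E' : forall v z, (if z == x then h v else e2 z) = h (if z == x then v else e1 z).
    by move=> v z; case: eqP.
  split=> [[v hv]|[w hw]].
    by exists (h v); apply/(IH hl' _ _ (E' v)).
  by exists (hinv w); apply/(IH hl' _ _ (E' (hinv w))); rewrite hK.
- move=> x p IH hl e1 e2 E.
  have hl' : flen p <= K by lia.
  have E' : forall v z, (if z == x then h v else e2 z) = h (if z == x then v else e1 z).
    by move=> v z; case: eqP.
  split=> hv w.
    by rewrite -(hK w); apply/(IH hl' _ _ (E' (hinv w))).
  by apply/(IH hl' _ _ (E' w)).
Qed.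


Record nstate := NState {
  sid : nat; svc : nat -> bool; snb : nat -> option (nat -> bool);
  sphi : formula; shist : seq (nat -> option (seq bool)) }.

Definition hist := seq (nat -> option (seq bool)).
Definition hmsg (h : hist) s k := nth (fun _ => None) h s k.
Definition hm (h : hist) s k := odflt [::] (hmsg h s k).
Definition isid (h : hist) k : bool := hmsg h 0 k != None.
Definition Nb (h : hist) := epsilon (inhabits 0) (fun N => forall k, isid h k -> k < N).
Definition nE (h : hist) := count (isid h) (iota 0 (Nb h)).
Definition Wd (h : hist) := up_log 2 (nE h).
Definition rank (h : hist) k := count (isid h) (iota 0 k).
Definition idr (h : hist) r := epsilon (inhabits 0) (fun k => isid h k /\ rank h k = r).
Definition Deg (h : hist) r := frombits (hm h 1 (idr h r)).
Definition Sf (h : hist) r := \sum_(0 <= r' < r) Deg h r'.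
Definition owner (h : hist) i :=
  epsilon (inhabits 0) (fun o => o < nE h /\ Sf h o <= i < Sf h o.+1).

Definition nbl st := filter (fun k => isSome (snb st k)) (iota 0 (Nb (shist st))).
Definition odeg st := size (nbl st).

Definition send (D : nat) (st : nstate) (k : nat) : seq bool :=
  let h := shist st in let t := size h in let K := flen (sphi st) in
  let n := nE h in let W := Wd h in
  if t == 0 then [::]
  else if t == 1 then bits W (odeg st)
  else if t < 2 + K then
    let a := t - 2 in
    let S := Sf h (rank h (sid st)) in
    let j := (rank h k + (n - S %% n)) %% n in
    let tg := nth 0 (nbl st) j in
    bits W (rank h tg) ++
      [:: j < odeg st; (if snb st tg is Some c then c a else false); svc st a]
  else if t < 2 + K + D * K then
    let u := t - (2 + K) in let q := u %/ K in let a := u %% K in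
    let i := rank h (sid st) + q * n in
    let o := owner h i in
    let m := hm h (2 + a) (idr h o) in
    bits W o ++ bits W (frombits (take W m)) ++ [:: i < Sf h n; nth false m W.+1]
  else [::].

Definition recv D st (msgs : nat -> option (seq bool)) :=
  NState (sid st) (svc st) (snb st) (sphi st)
   (rcons (shist st) (fun k => if k == sid st then Some (send D st (sid st)) else msgs k)).

Definition Rr D phi := 2 + flen phi + D * flen phi.
Definition slotmsg phi h r q c := hm h (2 + flen phi + q * flen phi + c) (idr h r).
Definition validH phi h r q := nth false (slotmsg phi h r q 0) (Wd h).*2.
Definition oH phi h r q := frombits (take (Wd h) (slotmsg phi h r q 0)).
Definition tH phi h r q := frombits (take (Wd h) (drop (Wd h) (slotmsg phi h r q 0))).
Definition ebH phi h r q c := nth false (slotmsg phi h r q c) (Wd h).*2.+1.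
Definition adjH D phi h : rel 'I_(nE h) := fun a b =>
  has (fun r => has (fun q => [&& validH phi h r q, oH phi h r q == a & tH phi h r q == b])
    (iota 0 D)) (iota 0 (nE h)).
Definition ecolH D phi h (a b : 'I_(nE h)) c := (c < flen phi) &&
  has (fun r => has (fun q => [&& validH phi h r q, oH phi h r q == a,
     tH phi h r q == b & ebH phi h r q c]) (iota 0 D)) (iota 0 (nE h)).
Definition vcolH phi h (a : 'I_(nE h)) c :=
  (c < flen phi) && nth false (hm h (2 + c) (idr h a)) (Wd h).+2.
Arguments vcolH : clear implicits.
Arguments adjH : clear implicits.
Arguments ecolH : clear implicits.
Definition decideH D phi h : bool :=
  if excluded_middle_informative (exists w : 'I_(nE h),
     sat (adjH D phi h) (vcolH phi h) (ecolH D phi h) (fun _ => w) phi)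
  then true else false.
Definition decide1 st : bool :=
  if excluded_middle_informative (sat (fun _ _ : 'I_1 => false) (fun _ c => svc st c)
       (fun _ _ _ => false) (fun _ => ord0) (sphi st)) then true else false.
Definition out D st : option bool :=
  if excluded_middle_informative (forall k, snb st k = None) then Some (decide1 st)
  else if Rr D (sphi st) <= size (shist st)
  then Some (decideH D (sphi st) (take (Rr D (sphi st)) (shist st))) else None.

Definition Alg D := CCAlg (fun i vc nb phi => NState i vc nb phi [::]) (send D) (recv D) (out D).



Section Run.
Variables (D n : nat) (adj : rel 'I_n) (vcol : 'I_n -> nat -> bool)
  (ecol : 'I_n -> 'I_n -> nat -> bool) (id : 'I_n -> nat) (phi : formula).
Hypothesis idI : injective id.

Definition R t v := run (Alg D) adj vcol ecol id phi t v.
Definition nbrG v k := match [pick u | adj v u && (id u == k)] with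
              | Some u => Some (ecol v u) | None => None end.
Definition rcvG s v k :=
  if [pick w | id w == k] is Some w then Some (send D (R s w) (id v)) else None.

Lemma R_fields t v : [/\ sid (R t v) = id v, svc (R t v) = vcol v,
   snb (R t v) = nbrG v & sphi (R t v) = phi].
Proof. by elim: t v => [|t IH] v //=; case: (IH v). Qed.

Lemma R_size t v : size (shist (R t v)) = t.
Proof. by elim: t v => [|t IH] v //=; rewrite size_rcons IH. Qed.

Lemma pick_id w : [pick x | id x == id w] = Some w.
Proof.
case: pickP => [x /eqP /idI -> //|/(_ w)]; by rewrite eqxx.
Qed.

Lemma R_hist t v s k : s < t -> hmsg (shist (R t v)) s k = rcvG s v k.
Proof.
elim: t v => [//|t IH] v hs.
rewrite /hmsg /= nth_rcons -/(R t v) R_size.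
case: ltnP => [hlt|hge]; first exact: IH.
have -> : s = t by lia.
rewrite eqxx; case: (R_fields t v) => -> _ _ _.
rewrite /rcvG; case: eqP => [->|kv]; first by rewrite pick_id.
rewrite (@eq_pick _ _ (fun w => id w == k)) // => w.
case: eqP => // hw; case: eqP => // wv; by case: kv; rewrite -hw wv.
Qed.


Arguments R : simpl never.

Definition good (h : hist) v m := forall s k, s < m -> hmsg h s k = rcvG s v k.

Lemma good_R t v : good (shist (R t v)) v t.
Proof. by move=> s k; apply: R_hist. Qed.

Arguments good_R : clear implicits.

Lemma good_take t v m : good (take m (shist (R t v))) v (minn m t).
Proof.
move=> s k hs; rewrite /hmsg nth_take; last by lia.
by apply: R_hist; lia.
Qed.

Lemma good_le h v m m' : m' <= m -> good h v m -> good h v m'.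
Proof. by move=> hm g s k hs; apply: g; lia. Qed.

Arguments good_take : clear implicits.

Definition isidG k := [exists w, id w == k].

Lemma isid_good h v m k : good h v m -> 0 < m -> isid h k = isidG k.
Proof.
move=> g hm; rewrite /isid g // /rcvG; case: pickP => [w /eqP <-|H].
  by apply/esym/existsP; exists w.
by apply/esym/negbTE/existsP => -[w]; rewrite H.
Qed.

Lemma count_ids (A : pred 'I_n) (p : pred nat) N :
  (forall k, p k = [exists w, A w && (id w == k)]) ->
  count p (iota 0 N) = #|[pred w | A w && (id w < N)]|.
Proof.
move=> hp; rewrite -size_filter cardE -(size_map id).
apply: perm_size; apply: uniq_perm.
- by apply: filter_uniq; apply: iota_uniq.
- by rewrite map_inj_uniq ?enum_uniq.
move=> k; rewrite mem_filter mem_iota add0n /= hp.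
apply/idP/idP.
  case/andP=> /existsP [w /andP [hA /eqP hk]] hN.
  by apply/mapP; exists w => //; rewrite mem_enum inE hA hk hN.
case/mapP=> w; rewrite mem_enum inE => /andP [hA hN] ->.
by rewrite hN andbT; apply/existsP; exists w; rewrite hA eqxx.
Qed.

Definition rk x := #|[pred w : 'I_n | id w < id x]|.

Lemma rk_lt x : rk x < n.
Proof.
rewrite /rk -[n in _ < n]card_ord; apply: proper_card.
apply/properP; split; first by apply/subsetP.
by exists x; rewrite ?inE // ltnn.
Qed.

Lemma rk_mono x y : id x < id y -> rk x < rk y.
Proof.
move=> hxy; apply: proper_card; apply/properP; split.
  by apply/subsetP => w; rewrite !inE => h; lia.
by exists x; rewrite !inE ?hxy ?ltnn.
Qed.

Lemma rk_inj : injective rk.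
Proof.
move=> x y hr; apply: idI.
case: (ltngtP (id x) (id y)) => // h.
  by have := rk_mono h; rewrite hr ltnn.
by have := rk_mono h; rewrite hr ltnn.
Qed.

Lemma rk_onto r : r < n -> exists x, rk x = r.
Proof.
move=> hr.
have inj : injective (fun x => Ordinal (rk_lt x)).
  by move=> x y /(congr1 val) /= /rk_inj.
have /codomP [x hx] := injF_onto inj (Ordinal hr).
by exists x; have := congr1 val hx.
Qed.

Definition N0 := \max_(w : 'I_n) (id w).+1.
Lemma id_lt_N0 w : id w < N0.
Proof. exact: (leq_bigmax (F := fun w => (id w).+1)). Qed.

Section Good.
Variables (h : hist) (v : 'I_n) (m : nat).
Hypothesis (g : good h v m) (hm0 : 0 < m).

Lemma Nb_ok w : id w < Nb h.
Proof.
have : forall k, isid h k -> k < Nb h.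
  apply: (epsilon_spec (inhabits 0) (fun N => forall k, isid h k -> k < N)).
  exists N0 => k; rewrite (isid_good k g hm0) => /existsP [x /eqP <-].
  exact: id_lt_N0.
apply; rewrite (isid_good _ g hm0); apply/existsP; exists w; exact: eqxx.
Qed.

Lemma nE_ok : nE h = n.
Proof.
rewrite /nE (@count_ids predT) => [|k]; last by rewrite (isid_good k g hm0).
rewrite -[RHS]card_ord; apply: eq_card => w; by rewrite !inE Nb_ok.
Qed.

Lemma rank_ok x : rank h (id x) = rk x.
Proof.
rewrite /rank (@count_ids predT) => [|k]; last by rewrite (isid_good k g hm0).
by apply: eq_card => w; rewrite !inE.
Qed.

Lemma idr_ok x : idr h (rk x) = id x.
Proof.
have [] : isid h (idr h (rk x)) /\ rank h (idr h (rk x)) = rk x.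
  apply: (epsilon_spec (inhabits 0) (fun k => isid h k /\ rank h k = rk x)).
  exists (id x); rewrite rank_ok (isid_good _ g hm0); split => //.
  by apply/existsP; exists x.
rewrite (isid_good _ g hm0) => /existsP [w /eqP <-].
by rewrite rank_ok => /rk_inj ->.
Qed.

Lemma Wd_ok : Wd h = up_log 2 n.
Proof. by rewrite /Wd nE_ok. Qed.

End Good.

Hypothesis hsimple : simple_graph adj.

Definition deg x := #|[pred w | adj x w]|.

Lemma deg_lt x : deg x < n.
Proof.
rewrite /deg -[n in _ < n]card_ord; apply: proper_card.
apply/properP; split; first by apply/subsetP.
by exists x; rewrite ?inE // (proj2 hsimple).
Qed.

Lemma nbrG_some x k : isSome (nbrG x k) = [exists w, adj x w && (id w == k)].
Proof.
rewrite /nbrG; case: pickP => [w hw|H] /=.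
  by apply/esym/existsP; exists w.
by apply/esym/negbTE/existsP => -[w]; rewrite H.
Qed.

Lemma nbrG_id x y : adj x y -> nbrG x (id y) = Some (ecol x y).
Proof.
move=> hxy; rewrite /nbrG; case: pickP => [w /andP [_ /eqP /idI ->] //|/(_ y)].
by rewrite hxy eqxx.
Qed.

Lemma nbl_R t x : 0 < t ->
  nbl (R t x) = filter (fun k => [exists w, adj x w && (id w == k)])
                 (iota 0 (Nb (shist (R t x)))).
Proof.
move=> ht; rewrite /nbl; case: (R_fields t x) => _ _ -> _.
by apply: eq_filter => k; rewrite nbrG_some.
Qed.

Lemma odeg_R t x : 0 < t -> odeg (R t x) = deg x.
Proof.
move=> ht; rewrite /odeg (nbl_R x ht) size_filter (@count_ids (adj x)) //.
apply: eq_card => w; by rewrite !inE (Nb_ok (good_R t x) ht) andbT.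
Qed.

Lemma mem_nbl t x y : 0 < t -> (id y \in nbl (R t x)) = adj x y.
Proof.
move=> ht; rewrite (nbl_R x ht) mem_filter mem_iota add0n leq0n /= (Nb_ok (good_R t x) ht) andbT.
apply/existsP/idP => [[w /andP [hw /eqP /idI <-]] //|hxy].
by exists y; rewrite hxy eqxx.
Qed.

Lemma nth_nbl t x j : 0 < t -> j < deg x ->
  exists2 y, adj x y & nth 0 (nbl (R t x)) j = id y.
Proof.
move=> ht hj; have : nth 0 (nbl (R t x)) j \in nbl (R t x).
  by apply: mem_nth; rewrite -/(odeg _) odeg_R.
rewrite (nbl_R x ht) mem_filter => /andP [/existsP [y /andP [hy /eqP <-]] _].
by exists y.
Qed.

Lemma n_le_exp : n <= 2 ^ up_log 2 n.
Proof. exact: up_logP. Qed.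

Lemma bitsK_n x : x < n -> frombits (bits (up_log 2 n) x) = x.
Proof. move=> hx; apply: bitsK; exact: (leq_trans hx n_le_exp). Qed.

Lemma hm_good h v m s x : good h v m -> s < m -> hm h s (id x) = send D (R s x) (id v).
Proof. by move=> g hs; rewrite /hm g // /rcvG pick_id. Qed.

Lemma send1 st k : size (shist st) = 1 -> send D st k = bits (Wd (shist st)) (odeg st).
Proof. by rewrite /send => ->. Qed.

Lemma send0 st k : size (shist st) = 0 -> send D st k = [::].
Proof. by rewrite /send => ->. Qed.

Lemma Deg_ok h v m x : good h v m -> 1 < m -> Deg h (rk x) = deg x.
Proof.
move=> g hm; have g1 : good h v 1 by apply: (good_le _ g); lia.
rewrite /Deg (idr_ok g1) // (hm_good _ g) //.
rewrite send1 ?R_size // (Wd_ok (good_R 1 x)) // odeg_R //.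
by rewrite bitsK_n // deg_lt.
Qed.

Definition DegP r := \sum_(x | rk x == r) deg x.
Definition SP r := \sum_(0 <= r' < r) DegP r'.

Lemma DegP_rk x : DegP (rk x) = deg x.
Proof.
rewrite /DegP (big_pred1 x) // => y /=; apply/eqP/eqP => [/rk_inj|->] //.
Qed.

Lemma Sf_ok h v m r : good h v m -> 1 < m -> r <= n -> Sf h r = SP r.
Proof.
move=> g hm hr; apply: eq_big_nat => r' hr'.
have [x <-] := rk_onto (r := r') ltac:(lia).
by rewrite (Deg_ok x g hm) DegP_rk.
Qed.

Lemma SP_rec r : SP r.+1 = SP r + DegP r.
Proof. by rewrite /SP big_nat_recr. Qed.

Lemma SP_mono a b : a <= b -> SP a <= SP b.
Proof.
move=> hab; rewrite /SP (big_cat_nat (leq0n a) hab) /=; exact: leq_addr.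
Qed.

Lemma SP_total : SP n = \sum_x deg x.
Proof.
rewrite (partition_big (fun x => Ordinal (rk_lt x)) predT) //=.
rewrite /SP big_mkord; apply: eq_bigr => r _; apply: eq_bigl => x.
by rewrite -val_eqE.
Qed.

Lemma sum_deg : \sum_x deg x = 2 * nedges adj.
Proof.
have E : \sum_x deg x = \sum_(p : 'I_n * 'I_n | adj p.1 p.2) 1.
  have := (@pair_big_dep _ _ addn _ _ predT (fun x y => adj x y) (fun _ _ => 1)).
  move=> /= <-; by apply: eq_bigr => x _; rewrite /deg -sum1_card.
rewrite E (bigID (fun p : 'I_n * 'I_n => p.1 < p.2)) /=.
have -> : \sum_(p : 'I_n * 'I_n | adj p.1 p.2 && ~~ (p.1 < p.2)) 1 =
          \sum_(p : 'I_n * 'I_n | adj p.1 p.2 && (p.1 < p.2)) 1.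
  rewrite (reindex_inj (h := fun p : 'I_n * 'I_n => (p.2, p.1))) /=;
    last by move=> [a b] [c d] [-> ->].
  apply: eq_bigl => -[a b] /=; rewrite (proj1 hsimple b a).
  case hab: (adj a b) => //=; rewrite -leqNgt leq_eqVlt.
  case: eqP => [ab|] //=; have abe : a = b by apply: val_inj.
  by rewrite abe (proj2 hsimple) in hab.
rewrite /nedges -sum1_card mul2n addnn; congr (_.*2); apply: eq_bigl => p.
by rewrite !inE.
Qed.

Lemma SP_unique o o' i : SP o <= i < SP o.+1 -> SP o' <= i < SP o'.+1 -> o = o'.
Proof.
move=> h1 h2; case: (ltngtP o o') => // hlt.
  by have := SP_mono hlt; lia.
by have := SP_mono hlt; lia.
Qed.

Lemma SP_exists i m : i < SP m -> exists2 o, o < m & SP o <= i < SP o.+1.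
Proof.
elim: m => [|m IH]; first by rewrite /SP big_geq.
case: (ltnP i (SP m)) => [/IH [o ho hi]|hge] hlt; first by exists o => //; lia.
by exists m => //; rewrite hge.
Qed.

Lemma owner_ok h v m i o : good h v m -> 1 < m -> o < n ->
  SP o <= i < SP o.+1 -> owner h i = o.
Proof.
move=> g hm ho hi; have g1 : good h v 1 by apply: (good_le _ g); lia.
have [] : owner h i < nE h /\ Sf h (owner h i) <= i < Sf h (owner h i).+1.
  apply: (epsilon_spec (inhabits 0) (fun o => o < nE h /\ Sf h o <= i < Sf h o.+1)).
  exists o; rewrite (nE_ok g1) // !(Sf_ok g hm) //; lia.
rewrite (nE_ok g1) // => ho'; rewrite !(Sf_ok g hm) //; last by lia.
by move=> hi'; apply: (SP_unique hi' hi).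
Qed.

Lemma filter_iota_bound (p : pred nat) N N' :
  (forall k, p k -> k < N) -> (forall k, p k -> k < N') ->
  filter p (iota 0 N) = filter p (iota 0 N').
Proof.
wlog hNN : N N' / N <= N'.
  move=> W h1 h2; case: (leqP N N') => h; first exact: W.
  by symmetry; apply: W => //; lia.
move=> h1 h2; rewrite -(subnKC hNN) iotaD filter_cat.
have -> : filter p (iota (0 + N) (N' - N)) = [::].
  apply/eqP; rewrite -[_ == _]negbK -has_filter; apply/hasPn => k.
  rewrite mem_iota => /andP [hk _]; apply/negP => /h1; lia.
by rewrite cats0.
Qed.

Definition nblx x := nbl (R 1 x).

Lemma nbl_eq t x : 0 < t -> nbl (R t x) = nblx x.
Proof.
move=> ht; rewrite /nblx (nbl_R x ht) (nbl_R x (isT : 0 < 1)).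
apply: filter_iota_bound => k /existsP [w /andP [_ /eqP <-]].
  exact: (Nb_ok (good_R t x) ht).
exact: (Nb_ok (good_R 1 x) isT).
Qed.

Lemma modn_arith S j : j < n -> ((S + j) %% n + (n - S %% n)) %% n = j.
Proof.
move=> hj; have n0 : 0 < n by lia.
have hs : S %% n < n by rewrite ltn_mod.
rewrite modnDml {1}(divn_eq S n).
have -> : S %/ n * n + S %% n + j + (n - S %% n) = S %/ n * n + (j + n) by lia.
by rewrite modnMDl modnDr modn_small.
Qed.

Lemma sendA st k a : size (shist st) = 2 + a -> a < flen (sphi st) ->
  send D st k =
   let h := shist st in let n := nE h in let W := Wd h in
   let S := Sf h (rank h (sid st)) in
   let j := (rank h k + (n - S %% n)) %% n in
   let tg := nth 0 (nbl st) j in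
   bits W (rank h tg) ++
      [:: j < odeg st; (if snb st tg is Some c then c a else false); svc st a].
Proof.
move=> E ha; rewrite /send E /=.
rewrite (_ : 2 + a < 2 + flen (sphi st) = true); last by lia.
by rewrite (_ : 2 + a - 2 = a) //; lia.
Qed.


Lemma sendA_R a x k : a < flen phi ->
  send D (R (2+a) x) k =
  bits (up_log 2 n) (rank (shist (R (2+a) x)) (nth 0 (nblx x) ((rank (shist (R (2+a) x)) k + (n - SP (rk x) %% n)) %% n))) ++
    [:: ((rank (shist (R (2+a) x)) k + (n - SP (rk x) %% n)) %% n) < deg x;
        (if nbrG x (nth 0 (nblx x) ((rank (shist (R (2+a) x)) k + (n - SP (rk x) %% n)) %% n)) is Some c then c a else false); vcol x a].
Proof.
move=> ha; have g := good_R (2+a) x.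
have g0 : 0 < 2 + a by [].
case: (R_fields (2+a) x) => Eid Evc Enb Ephi.
rewrite (sendA k (a := a)); last by rewrite Ephi. 2: by rewrite R_size.
cbv zeta.
rewrite (nE_ok g g0) (Wd_ok g g0) Eid (rank_ok g g0).
rewrite (Sf_ok g (leq_addr a 2) (ltnW (rk_lt x))).
by rewrite odeg_R // (nbl_eq x g0) Enb Evc.
Qed.

Lemma sendA_edge a x y z j : a < flen phi -> j < deg x ->
  nth 0 (nblx x) j = id y -> adj x y -> rk z = (SP (rk x) + j) %% n ->
  send D (R (2+a) x) (id z) = bits (up_log 2 n) (rk y) ++ [:: true; ecol x y a; vcol x a].
Proof.
move=> ha hj hy hxy hz; have g := good_R (2+a) x.
have g0 : 0 < 2 + a by [].
rewrite (sendA_R x (id z) ha) (rank_ok g g0) hz modn_arith; last by have := deg_lt x; lia.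
by rewrite hy (rank_ok g g0) hj (nbrG_id hxy).
Qed.

Lemma sendA_last a x k : a < flen phi ->
  nth false (send D (R (2+a) x) k) (up_log 2 n).+2 = vcol x a.
Proof.
move=> ha; rewrite (sendA_R x k ha) nth_cat size_bits ifF; last by lia.
by rewrite (_ : (up_log 2 n).+2 - up_log 2 n = 2) //; lia.
Qed.

Lemma sendB st k q c : let K := flen (sphi st) in
  size (shist st) = 2 + K + q * K + c -> c < K -> q < D ->
  send D st k =
   bits (Wd (shist st)) (owner (shist st) (rank (shist st) (sid st) + q * nE (shist st))) ++
   bits (Wd (shist st)) (frombits (take (Wd (shist st))
      (hm (shist st) (2 + c) (idr (shist st) (owner (shist st) (rank (shist st) (sid st) + q * nE (shist st))))))) ++
   [:: rank (shist st) (sid st) + q * nE (shist st) < Sf (shist st) (nE (shist st));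
       nth false (hm (shist st) (2 + c) (idr (shist st) (owner (shist st) (rank (shist st) (sid st) + q * nE (shist st))))) (Wd (shist st)).+1].
Proof.
move=> K E hc hq; rewrite /send E -/K.
have K0 : 0 < K by apply: leq_ltn_trans hc.
have hDK : q * K + c < D * K.
  apply: (@leq_trans (q.+1 * K)); first by rewrite mulSn; lia.
  by rewrite leq_mul2r hq orbT.
cbv zeta.
rewrite (_ : (2 + K + q * K + c == 0) = false); last by lia.
rewrite (_ : (2 + K + q * K + c == 1) = false); last by lia.
rewrite (_ : (2 + K + q * K + c < 2 + K) = false); last by lia.
rewrite (_ : (2 + K + q * K + c < 2 + K + D * K) = true); last by lia.
have -> : 2 + K + q * K + c - (2 + K) = q * K + c by lia.
by rewrite divnMDl // modnMDl (divn_small hc) (modn_small hc) addn0.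
Qed.

Hypothesis hSP : SP n <= D * n.

Lemma sendB_R z q c k : q < D -> c < flen phi ->
  let t := 2 + flen phi + q * flen phi + c in
  let h := shist (R t z) in
  let i := rk z + q * n in
  let W := up_log 2 n in
  send D (R t z) k =
   bits W (owner h i) ++
   bits W (frombits (take W (hm h (2 + c) (idr h (owner h i))))) ++
   [:: i < SP n; nth false (hm h (2 + c) (idr h (owner h i))) W.+1].
Proof.
move=> hq hc t h i W.
have g := good_R t z; have g0 : 0 < t by rewrite /t; lia.
have g1 : 1 < t by rewrite /t; lia.
case: (R_fields t z) => Eid Evc Enb Ephi.
rewrite (sendB k (q := q) (c := c)) ?Ephi ?R_size //.
rewrite Eid (rank_ok g g0) (nE_ok g g0) (Wd_ok g g0) (Sf_ok g g1 (leqnn n)).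
by [].
Qed.

Lemma sendB_valid_bit z q c k : q < D -> c < flen phi ->
  nth false (send D (R (2 + flen phi + q * flen phi + c) z) k) (up_log 2 n).*2
  = (rk z + q * n < SP n).
Proof.
move=> hq hc; rewrite (sendB_R z k hq hc) /= nth_cat size_bits ifF; last by lia.
rewrite nth_cat size_bits ifF; last by lia.
by rewrite (_ : (up_log 2 n).*2 - up_log 2 n - up_log 2 n = 0) //; lia.
Qed.

Lemma sendB_valid x y j z q c k : j < deg x -> nth 0 (nblx x) j = id y -> adj x y ->
  rk z = (SP (rk x) + j) %% n -> q = (SP (rk x) + j) %/ n -> c < flen phi ->
  send D (R (2 + flen phi + q * flen phi + c) z) k =
    bits (up_log 2 n) (rk x) ++ bits (up_log 2 n) (rk y) ++ [:: true; ecol x y c].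
Proof.
move=> hj hy hxy hz hqd hc.
set i := SP (rk x) + j.
have hi1 : i < SP (rk x).+1 by rewrite SP_rec DegP_rk /i; lia.
have hi : i < SP n by apply: (leq_trans hi1); apply: SP_mono; exact: rk_lt.
have n0 : 0 < n by have := rk_lt x; lia.
have hq : q < D by rewrite hqd ltn_divLR // (leq_trans hi hSP).
set t := 2 + flen phi + q * flen phi + c.
have g := good_R t z; have g0 : 0 < t by rewrite /t; lia.
have g1 : 1 < t by rewrite /t; lia.
have ei : rk z + q * n = i by rewrite hz hqd addnC -divn_eq.
rewrite (sendB_R z k hq hc) /= -/t ei.
rewrite (owner_ok g g1 (rk_lt x)); last by rewrite /i; lia.
rewrite (idr_ok g g0) (hm_good _ g); last by rewrite /t; lia.
rewrite (sendA_edge hc hj hy hxy); last by rewrite hz.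
rewrite take_size_cat ?size_bits // bitsK_n ?rk_lt //.
rewrite nth_cat size_bits ifF; last by lia.
by rewrite hi (_ : (up_log 2 n).+1 - up_log 2 n = 1) //; lia.
Qed.

Lemma dec_msg a b vb eb : a < n -> b < n ->
  let W := up_log 2 n in let m := bits W a ++ bits W b ++ [:: vb; eb] in
  [/\ frombits (take W m) = a, frombits (take W (drop W m)) = b,
      nth false m W.*2 = vb & nth false m W.*2.+1 = eb].
Proof.
move=> ha hb W m; split.
- by rewrite /m take_size_cat ?size_bits // bitsK_n.
- by rewrite /m drop_size_cat ?size_bits // take_size_cat ?size_bits // bitsK_n.
- rewrite /m nth_cat size_bits -addnn ltnNge leq_addr /= addnK.
  by rewrite nth_cat size_bits ltnn subnn.
- rewrite /m nth_cat size_bits -addnn ltnNge ltnW ?ltnS ?leq_addr //= subSn ?leq_addr // addnK.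
  by rewrite nth_cat size_bits ltnNge leqnSn /= subSn // subnn.
Qed.
Section Recv.
Variables (h : hist) (v : 'I_n) (m : nat).
Hypothesis (g : good h v m) (hm : Rr D phi <= m).

Lemma g0 : 0 < m. Proof. by move: hm; rewrite /Rr; lia. Qed.
Lemma g1 : 1 < m. Proof. by move: hm; rewrite /Rr; lia. Qed.

Lemma slot_send z q c : q < D -> c < flen phi ->
  slotmsg phi h (rk z) q c = send D (R (2 + flen phi + q * flen phi + c) z) (id v).
Proof.
move=> hq hc; rewrite /slotmsg (idr_ok g g0) (hm_good _ g) //.
apply: (leq_trans _ hm); rewrite /Rr.
have : q * flen phi + c < D * flen phi.
  apply: (@leq_trans (q.+1 * flen phi)); first by rewrite mulSn; lia.
  by rewrite leq_mul2r hq orbT.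
lia.
Qed.

Lemma validH_ok z q : q < D -> validH phi h (rk z) q = (rk z + q * n < SP n).
Proof.
move=> hq; rewrite /validH slot_send //; last by case: (phi) => /=.
by rewrite (Wd_ok g g0) sendB_valid_bit //; case: (phi).
Qed.

Lemma slot_of_edge x y j z q : j < deg x -> nth 0 (nblx x) j = id y -> adj x y ->
  rk z = (SP (rk x) + j) %% n -> q = (SP (rk x) + j) %/ n ->
  [/\ oH phi h (rk z) q = rk x, tH phi h (rk z) q = rk y &
      forall c, c < flen phi -> ebH phi h (rk z) q c = ecol x y c].
Proof.
move=> hj hy hxy hz hqd.
have n0 : 0 < n by have := rk_lt x; lia.
have hi : SP (rk x) + j < SP n.
  apply: (@leq_trans (SP (rk x).+1)); first by rewrite SP_rec DegP_rk; lia.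
  by apply: SP_mono; exact: rk_lt.
have hq : q < D by rewrite hqd ltn_divLR // (leq_trans hi hSP).
have K0 : 0 < flen phi by case: (phi).
have hs c : c < flen phi -> slotmsg phi h (rk z) q c =
    bits (up_log 2 n) (rk x) ++ bits (up_log 2 n) (rk y) ++ [:: true; ecol x y c].
  by move=> hc; rewrite slot_send // (sendB_valid _ hj hy hxy hz hqd hc).
have [d1 d2 _ _] := dec_msg true (ecol x y 0) (rk_lt x) (rk_lt y).
rewrite /oH /tH (Wd_ok g g0) hs // d1 d2; split => // c hc.
have [_ _ _ d4] := dec_msg true (ecol x y c) (rk_lt x) (rk_lt y).
by rewrite /ebH (Wd_ok g g0) hs.
Qed.

End Recv.

Lemma K0 : 0 < flen phi. Proof. by case: (phi). Qed.

Lemma slot_sound h v m z q : good h v m -> Rr D phi <= m -> q < D -> rk z + q * n < SP n ->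
  exists x y, adj x y /\ [/\ oH phi h (rk z) q = rk x, tH phi h (rk z) q = rk y &
      forall c, c < flen phi -> ebH phi h (rk z) q c = ecol x y c].
Proof.
move=> g hm hq hi.
have n0 : 0 < n by have := rk_lt z; lia.
have [o ho hoi] := SP_exists hi.
have [x hx] := rk_onto ho; subst o.
set j := rk z + q * n - SP (rk x).
have hj : j < deg x by move: hoi; rewrite SP_rec DegP_rk /j; lia.
have [y hxy hy] := nth_nbl (isT : 0 < 1) hj.
have ei : SP (rk x) + j = rk z + q * n by rewrite /j; lia.
exists x, y; split => //; apply: (slot_of_edge g hm hj hy hxy).
  by rewrite ei addnC modnMDl modn_small // rk_lt.
by rewrite ei addnC divnMDl // divn_small ?rk_lt // addn0.
Qed.

Lemma slot_complete h v m x y : good h v m -> Rr D phi <= m -> adj x y ->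
  exists z q, [/\ q < D, rk z + q * n < SP n, oH phi h (rk z) q = rk x, tH phi h (rk z) q = rk y &
      forall c, c < flen phi -> ebH phi h (rk z) q c = ecol x y c].
Proof.
move=> g hm hxy.
have n0 : 0 < n by have := rk_lt x; lia.
set j := index (id y) (nblx x).
have hmem : id y \in nblx x by rewrite /nblx (mem_nbl x y (isT : 0 < 1)).
have hj : j < deg x by rewrite -(odeg_R x (isT : 0 < 1)) /odeg -/(nblx x) index_mem.
have hy : nth 0 (nblx x) j = id y by rewrite nth_index.
set i := SP (rk x) + j.
have hi : i < SP n.
  apply: (@leq_trans (SP (rk x).+1)); first by rewrite SP_rec DegP_rk /i; lia.
  by apply: SP_mono; exact: rk_lt.
have [z hz] := rk_onto (r := i %% n) ltac:(by rewrite ltn_mod).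
exists z, (i %/ n).
have [e1 e2 e3] := slot_of_edge g hm hj hy hxy hz (erefl _).
split => //; first by rewrite ltn_divLR // (leq_trans hi hSP).
by rewrite hz addnC -divn_eq.
Qed.

Section Final.
Variables (h : hist) (v : 'I_n) (m : nat).
Hypotheses (g : good h v m) (hm : Rr D phi <= m).

Lemma rk_nE x : rk x < nE h.
Proof. by rewrite (nE_ok g (g0 hm)) rk_lt. Qed.

Definition hmap x : 'I_(nE h) := Ordinal (rk_nE x).
Definition hinv (w : 'I_(nE h)) : 'I_n := odflt v [pick x | rk x == val w].

Lemma hmapK w : hmap (hinv w) = w.
Proof.
have hw : (w : nat) < n by have := ltn_ord w; have := nE_ok g (g0 hm); lia.
have [x0 hx0] := rk_onto hw.
rewrite /hinv; case: pickP => [x /eqP hx|H]; first by apply: val_inj; rewrite /= hx.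
by have := H x0; rewrite hx0 eqxx.
Qed.

Lemma hmap_inj : injective hmap.
Proof. by move=> x y /(congr1 val) /= /rk_inj. Qed.

Lemma adjH_ok x y : adjH D phi h (hmap x) (hmap y) = adj x y.
Proof.
apply/idP/idP.
- move/hasP => [r]; rewrite mem_iota add0n => /andP [_ hr0].
  have hr : r < n by move: hr0; rewrite (nE_ok g (g0 hm)).
  move=> /hasP [q]; rewrite mem_iota add0n => /andP [_ hq] /and3P [hv /eqP ho /eqP ht].
  have [z hz] := rk_onto hr; subst r.
  move: hv; rewrite (validH_ok g hm z hq) => hv.
  have [x' [y' [hxy [e1 e2 _]]]] := slot_sound g hm hq hv.
  move: ho ht; rewrite e1 e2 /= => /rk_inj <- /rk_inj <-; exact: hxy.
- move=> hxy; have [z [q [hq hv e1 e2 _]]] := slot_complete g hm hxy.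
  apply/hasP; exists (rk z); first by rewrite mem_iota add0n rk_nE.
  apply/hasP; exists q; first by rewrite mem_iota add0n.
  by rewrite (validH_ok g hm z hq) hv e1 e2 !eqxx.
Qed.

Lemma ecolH_ok x y c : c < flen phi -> adj x y ->
  ecolH D phi h (hmap x) (hmap y) c = ecol x y c.
Proof.
move=> hc hxy; rewrite /ecolH hc /=.
apply/idP/idP.
- move/hasP => [r]; rewrite mem_iota add0n => /andP [_ hr0].
  have hr : r < n by move: hr0; rewrite (nE_ok g (g0 hm)).
  move=> /hasP [q]; rewrite mem_iota add0n => /andP [_ hq] /and4P [hv /eqP ho /eqP ht he].
  have [z hz] := rk_onto hr; subst r.
  move: hv; rewrite (validH_ok g hm z hq) => hv.
  have [x' [y' [hxy' [e1 e2 e3]]]] := slot_sound g hm hq hv.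
  move: ho ht he; rewrite e1 e2 e3 //= => /rk_inj <- /rk_inj <-; done.
- move=> he; have [z [q [hq hv e1 e2 e3]]] := slot_complete g hm hxy.
  apply/hasP; exists (rk z); first by rewrite mem_iota add0n rk_nE.
  apply/hasP; exists q; first by rewrite mem_iota add0n.
  by rewrite (validH_ok g hm z hq) hv e1 e2 e3 // !eqxx.
Qed.

Lemma vcolH_ok x c : c < flen phi -> vcolH phi h (hmap x) c = vcol x c.
Proof.
move=> hc; rewrite /vcolH hc /= (Wd_ok g (g0 hm)) (idr_ok g (g0 hm)).
rewrite (hm_good _ g); first exact: sendA_last.
by apply: (leq_trans _ hm); rewrite /Rr; lia.
Qed.

Lemma decideH_ok v0 : sentence phi ->
  (decideH D phi h = true <-> models adj vcol ecol v0 phi).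
Proof.
move=> hs.
have iso x : sat adj vcol ecol (fun _ => x) phi <->
    sat (adjH D phi h) (vcolH phi h) (ecolH D phi h) (fun _ => hmap x) phi.
  apply: (sat_iso hmap_inj hmapK adjH_ok (K := flen phi)) => //.
  - by move=> y c hc; rewrite vcolH_ok.
  - by move=> y z c hc hyz; rewrite ecolH_ok.
have cst x : sat adj vcol ecol (fun _ => x) phi <-> sat adj vcol ecol (fun _ => v0) phi.
  apply: sat_fv => z; move: hs; rewrite /sentence; case: (fv phi) => //.
rewrite /decideH /models; case: excluded_middle_informative => [[w hw]|hn]; split => //.
- by move=> _; apply/(cst (hinv w))/iso; rewrite hmapK.
- by move=> H; case: hn; exists (hmap v0); apply/iso.
Qed.

End Final.

Lemma size_send st k : size (send D st k) <= 3 + (Wd (shist st)).*2.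
Proof.
rewrite /send; cbv zeta.
destruct (size (shist st) == 0) => //.
destruct (size (shist st) == 1); first by rewrite size_bits -addnn; lia.
destruct (size (shist st) < 2 + flen (sphi st)); first by rewrite size_cat size_bits /= -addnn; lia.
destruct (size (shist st) < 2 + flen (sphi st) + D * flen (sphi st)) => //.
by rewrite !size_cat !size_bits /= -addnn; lia.
Qed.

Lemma hist_succ t v : shist (R t.+1 v) = rcons (shist (R t v))
  (fun k => if k == sid (R t v) then Some (send D (R t v) (sid (R t v))) else
     match [pick u | (u != v) && (id u == k)] with
     | Some u => Some (send D (R t u) (id v)) | None => None end).
Proof. by []. Qed.

Lemma out_stable t v b : out D (R t v) = Some b -> out D (R t.+1 v) = Some b.
Proof.
case: (R_fields t v) => _ Evc Enb Ephi; case: (R_fields t.+1 v) => _ Evc' Enb' Ephi'.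
rewrite /out Enb Enb' Ephi Ephi' /decide1 Evc Evc' Ephi Ephi'.
set X := excluded_middle_informative _; case: X => H; first by [].
rewrite !R_size; case: ifP => // hle [<-]; rewrite ifT; last by lia.
rewrite hist_succ -cats1 takel_cat ?R_size //.
Qed.

Lemma out_big t v : (exists u, adj v u) -> Rr D phi <= t ->
  out D (R t v) = Some (decideH D phi (take (Rr D phi) (shist (R t v)))).
Proof.
move=> [u hu] ht; case: (R_fields t v) => _ _ Enb Ephi.
rewrite /out Enb Ephi; set X := excluded_middle_informative (forall k, nbrG v k = None); case: X => [H|H'].
  by have := H (id u); rewrite (nbrG_id hu).
by rewrite R_size ifT.
Qed.

Lemma decides_ok v0 : connected_graph adj -> sentence phi ->
  cc_decides (Alg D) 5 (Rr D phi * up_log 2 n) adj vcol ecol id phi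
    (models adj vcol ecol v0 phi).
Proof.
move=> hconn hsent.
have Eo t v : @cc_out (Alg D) (run (Alg D) adj vcol ecol id phi t v) = out D (R t v) by [].
case: (ltnP 1 n) => hn.
- have hL : 0 < up_log 2 n by rewrite up_log_gt0 hn.
  have hnb v : exists u, adj v u.
    have [w hw] : exists w : 'I_n, w != v.
      case: (eqVneq (val v) 0) => hv.
        by exists (Ordinal hn); apply/eqP => /(congr1 val) /=; rewrite hv.
      by exists (Ordinal (ltnW hn)); apply/eqP => /(congr1 val) /= h0; move/eqP: hv; apply; by rewrite /= -h0.
    have := hconn v w; case/connectP => p hp hl.
    case: p hp hl => [/= _ hl|u p /= /andP [hvu _] _]; last by exists u.
    by rewrite hl eqxx in hw.
  have hT : Rr D phi <= Rr D phi * up_log 2 n by rewrite leq_pmulr.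
  split; [|split; [|split]].
  + move=> t u w ht uw; have := size_send (R t u) (id w).
    case: t ht => [|t] ht.
      by rewrite (send0 _ (R_size 0 u)).
    rewrite (Wd_ok (good_R t.+1 u)) // => hs; apply: (leq_trans hs).
    rewrite -addnn; lia.
  + by move=> t v b _; rewrite !Eo; apply: out_stable.
  + by move=> v; rewrite Eo (out_big (hnb v) hT).
  + have g v : good (take (Rr D phi) (shist (R (Rr D phi * up_log 2 n) v))) v (Rr D phi).
      by have := good_take (Rr D phi * up_log 2 n) v (Rr D phi); rewrite (minn_idPl hT).
    split.
      move=> [v]; rewrite Eo (out_big (hnb v) hT) => -[hd]; exact: (proj1 (decideH_ok (g v) (leqnn _) v0 hsent) hd).
    move=> hm; exists v0; rewrite Eo (out_big (hnb v0) hT); congr Some.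
    exact: (proj2 (decideH_ok (g v0) (leqnn _) v0 hsent) hm).
- have n1 : n = 1 by have := ltn_ord v0; lia.
  have all_eq (x y : 'I_n) : x = y by apply: ord_inj; have := ltn_ord x; have := ltn_ord y; lia.
  have -> : up_log 2 n = 0 by rewrite n1.
  rewrite muln0.
  have hnone v : forall k, nbrG v k = None.
    move=> k; rewrite /nbrG; case: pickP => // u /andP [hu _].
    by rewrite (all_eq v u) (proj2 hsimple) in hu.
  have out0 v : out D (R 0 v) = Some (decide1 (R 0 v)).
    rewrite /out; set X := excluded_middle_informative _; case: X => // -[].
    by case: (R_fields 0 v) => _ _ -> _.
  split; [by []|split; [by []|split]].
  + by move=> v; rewrite Eo out0.
  + have key v : decide1 (R 0 v) = true <-> models adj vcol ecol v0 phi.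
      case: (R_fields 0 v) => _ Evc _ Ephi.
      have iso : sat adj vcol ecol (fun _ => v0) phi <->
          sat (fun _ _ : 'I_1 => false) (fun _ c => vcol v c) (fun _ _ _ => false) (fun _ => ord0) phi.
        have i1 : injective (fun _ : 'I_n => (ord0 : 'I_1)) by move=> x y _; apply: all_eq.
        have i2 : forall w : 'I_1, (fun _ : 'I_n => (ord0 : 'I_1)) ((fun _ => v0) w) = w.
          by move=> w; rewrite (ord1 w).
        have i3 : forall x y, (fun _ _ : 'I_1 => false) ((fun _ : 'I_n => (ord0 : 'I_1)) x) ((fun _ : 'I_n => (ord0 : 'I_1)) y) = adj x y.
          by move=> x y; rewrite (all_eq x y) (proj2 hsimple).
        have i4 : forall x c, c < flen phi -> (fun _ c => vcol v c) ((fun _ : 'I_n => (ord0 : 'I_1)) x) c = vcol x c.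
          by move=> x c _; rewrite (all_eq x v).
        apply: (sat_iso i1 i2 i3 i4 (K := flen phi)) => //.
        by move=> x y j _; rewrite (all_eq x y) (proj2 hsimple).
      rewrite /decide1 Evc Ephi /models; set X := excluded_middle_informative _; case: X => H; split => //.
        by move=> _; apply/iso.
      by move/iso.
    split; first by move=> [v]; rewrite Eo out0 => -[hd]; exact: (proj1 (key v) hd).
    by move=> hm; exists v0; rewrite Eo out0; congr Some; exact: (proj2 (key v0) hm).
Qed.

End Run.

Unset Implicit Arguments.
Theorem mainTheorem16 (C : graph_class) :
  effectively_bounded_expansion C ->
  (* c: identifiers have at most c * log n bits, i.e. are < n ^ c *)
  forall c : nat,
  exists (f : nat -> nat) (B : nat) (A : cc_algorithm),
    computable f /\
    forall (n : nat) (adj : rel 'I_n) (vcol : 'I_n -> nat -> bool)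
           (ecol : 'I_n -> 'I_n -> nat -> bool) (id : 'I_n -> nat)
           (phi : formula) (v0 : 'I_n),
      C n adj -> simple_graph adj -> connected_graph adj ->
      (forall x y j, ecol x y j = ecol y x j) ->
      injective id -> (forall v, id v < n ^ c) ->
      sentence phi ->
      cc_decides A B (f (flen phi) * up_log 2 n) adj vcol ecol id phi
        (models adj vcol ecol v0 phi).
Proof.
move=> [fe [cf hBE]] c.
exists (fun x => (2 * fe 0).+1 * x + 2), 5, (Alg (2 * fe 0)).
split; first exact: computable_affine.
move=> n adj vcol ecol id phi v0 HC hs hconn _ hinj _ hsent.
have NE : nedges adj <= fe 0 * n.
  apply: (hBE 0 n adj HC hs n adj hs).
  exists (fun i => [set i]); split; [|split].
  - by move=> i j ij; rewrite disjoints1 inE.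
  - by move=> i; exists i; rewrite ?inE //=.
  - by move=> i j hij; exists i, j; rewrite !inE !eqxx.
have hSP : SP adj id n <= 2 * fe 0 * n.
  by rewrite SP_total sum_deg // -mulnA leq_mul2l NE orbT.
have E : (2 * fe 0).+1 * flen phi + 2 = Rr (2 * fe 0) phi by rewrite /Rr mulSn; lia.
rewrite E; exact: (decides_ok vcol ecol hinj hs hSP v0 hconn hsent).
Qed.
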